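(* Let $p$ be a prime and $D$ an integer with $1 \le D \le p-1$. Let $k\ge 1$ and let $A_1,\dots,A_k \subseteq \mathbb{Z}_p$ be $D$-APs. Then the sumset $\sum_{i=1}^k A_i$ is contiguous relative to $D$.
   Context: $\mathbb{Z}_p=\{0,\dots,p-1\}$ under addition mod $p$. Sumset: $\sum_{i=1}^k A_i = \{a_1+\dots+a_k \bmod p : a_i\in A_i\}$. For $b\in\{0,\dots,D-1\}$, the $D$-AP with base $b$ is $A_{(b)}=\{b+iD : i \text{ integer},\ 0\le i\le \lfloor (p-1-b)/D\rfloor\}\subseteq\mathbb{Z}_p$; a $D$-AP is any set of this form. For $g_0,g_1\in\mathbb{Z}_p$, $\mathrm{dist}_{p,D}(g_0,g_1)=\min\{(g_1-g_0)D^{-1}\bmod p,\ (g_0-g_1)D^{-1}\bmod p\}$, each term viewed as an integer in $\{0,\dots,p-1\}$. A set $A\subseteq\mathbb{Z}_p$ is contiguous relative to $D$ if its elements can be listed as $a_1,\dots,a_m$ (each element exactly once) with $\mathrm{dist}_{p,D}(a_j,a_{j+1})=1$ for all $1\le j<m$; a one-element set is contiguous. *)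

(* Defs.v *)
From HB Require Import structures.
From mathcomp Require Import all_boot all_order all_algebra.
Unset Printing Implicit Defensive.
Import GRing.Theory.
Local Open Scope ring_scope.

(* Z_p is modelled as 'Z_p (p prime, so p >= 2 and 'Z_p = Z/pZ with
   elements 0..p-1, addition mod p). *)

Definition sumset (p k : nat) (A : 'I_k -> {set 'Z_p}) : {set 'Z_p} :=
  [set x : 'Z_p | [exists a : {ffun 'I_k -> 'Z_p},
     [forall i, a i \in A i] && (x == \sum_(i < k) a i)]].

Definition DAP (p D b : nat) : {set 'Z_p} :=
  [set x : 'Z_p | [exists i : 'I_p,
     (i <= (p.-1 - b) %/ D)%N && (nat_of_ord x == b + i * D)%N]].

Definition isDAP (p D : nat) (A : {set 'Z_p}) : Prop :=
  exists b : nat, (b < D)%N /\ A = DAP p D b.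

Definition distpD (p D : nat) (g0 g1 : 'Z_p) : nat :=
  minn (nat_of_ord ((g1 - g0) * (D%:R)^-1))
       (nat_of_ord ((g0 - g1) * (D%:R)^-1)).

Definition contiguous (p D : nat) (A : {set 'Z_p}) : Prop :=
  exists s : seq 'Z_p,
    [/\ uniq s, (forall x, (x \in A) = (x \in s))
      & (forall j : nat, (j.+1 < size s)%N ->
           distpD p D (nth 0 s j) (nth 0 s j.+1) = 1%N)].

(* Main.v *)
Require Import Defs.
From mathcomp Require Import all_boot all_order all_algebra zify.
Import GRing.Theory.
Local Open Scope ring_scope.

Lemma greedy (f : nat -> nat) (j n : nat) :
  (\sum_(i < n) minn (f i) (j - \sum_(i' < i) f i') = minn j (\sum_(i < n) f i))%N.
Proof.
elim: n => [|n IH]; first by rewrite !big_ord0 minn0.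
rewrite !big_ord_recr /= IH.
move: (\sum_(i < n) f i)%N => S; lia.
Qed.

Lemma sumnat (p k : nat) (c : 'I_k -> nat) :
  (\sum_(i < k) (c i)%:R : 'Z_p) = (\sum_(i < k) c i)%N%:R.
Proof. by rewrite natr_sum. Qed.

Lemma sumsetP (p D k : nat) (A : 'I_k -> {set 'Z_p}) (b m : 'I_k -> nat) (x : 'Z_p) :
  (forall i, forall y, (y \in A i) <-> exists2 j : nat, (j <= m i)%N & y = (b i + j * D)%N%:R) ->
  (0 < k)%N ->
  (x \in sumset p k A) <-> exists2 j : nat, (j <= \sum_(i < k) m i)%N &
        x = (\sum_(i < k) b i + j * D)%N%:R.
Proof.
move=> hA k0; split.
  rewrite inE => /existsP [a /andP [/forallP ha /eqP ->]].
  have ex : forall i, exists j : nat, (j <= m i)%N && (a i == (b i + j * D)%N%:R).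
    move=> i; have [j hj ->] := (hA i (a i)).1 (ha i).
    by exists j; rewrite hj eqxx.
  pose j i := xchoose (ex i).
  have hj : forall i, (j i <= m i)%N /\ a i = (b i + j i * D)%N%:R.
    by move=> i; have /andP[h1 /eqP h2] := xchooseP (ex i).
  exists (\sum_(i < k) j i)%N; first by apply: leq_sum => i _; case: (hj i).
  rewrite (eq_bigr (fun i => (b i + j i * D)%N%:R)); last by move=> i _; case: (hj i).
  by rewrite sumnat big_split /= big_distrl.
case=> j hjM ->; case: k A b m hA k0 hjM => // k' A b m hA _ hjM.
pose f n := m (inord n).
have fM : (\sum_(i < k'.+1) f i = \sum_(i < k'.+1) m i)%N.
  by apply: eq_bigr => i _; rewrite /f inord_val.
pose g (i : 'I_k'.+1) := minn (f i) (j - \sum_(i' < i) f i').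
have gs : (\sum_(i < k'.+1) g i = j)%N by rewrite /g greedy fM; lia.
rewrite inE; apply/existsP; exists [ffun i => (b i + g i * D)%N%:R].
apply/andP; split.
  apply/forallP => i; rewrite ffunE; apply/(hA i); exists (g i) => //.
  by rewrite /g /f inord_val geq_minl.
apply/eqP; symmetry; rewrite (eq_bigr (fun i => (b i + g i * D)%N%:R)); last by move=> i _; rewrite ffunE.
by rewrite sumnat big_split /= -big_distrl gs.
Qed.
Lemma DAPP (p D b : nat) (x : 'Z_p) : (1 < p)%N -> (0 < D)%N -> (b < p)%N ->
  reflect (exists2 j : nat, (j <= (p.-1 - b) %/ D)%N & x = (b + j * D)%N%:R)
          (x \in DAP p D b).
Proof.
move=> p1 D0 bp.
have qle : ((p.-1 - b) %/ D * D <= p.-1 - b)%N by apply: leq_trunc_div.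
rewrite inE; apply: (iffP existsP).
  case=> i /andP[hi /eqP hx]; exists (nat_of_ord i) => //.
  have : (i * D <= (p.-1 - b) %/ D * D)%N by rewrite leq_mul2r hi orbT.
  move=> h.
  apply: val_inj; rewrite /= val_Zp_nat // hx modn_small //; lia.
case=> j hj ->.
have qle2 : ((p.-1 - b) %/ D <= p.-1 - b)%N by apply: leq_div.
have jp : (j < p)%N by lia.
exists (Ordinal jp); rewrite /= hj /= val_Zp_nat // modn_small //.
have : (j * D <= (p.-1 - b) %/ D * D)%N by rewrite leq_mul2r hj orbT.
lia.
Qed.

Theorem lemma2p6 (p D k : nat) (A : 'I_k -> {set 'Z_p}) :
  prime p -> (1 <= D)%N -> (D <= p - 1)%N -> (1 <= k)%N ->
  (forall i, isDAP p D (A i)) ->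
  contiguous p D (sumset p k A).
Proof.
move=> pp D1 Dp k1 hA.
have p1 := prime_gt1 pp.
have ex : forall i, exists b, (b < D)%N && (A i == DAP p D b).
  by move=> i; case: (hA i) => b [h1 h2]; exists b; rewrite h1 h2 eqxx.
pose b i := xchoose (ex i).
pose m i := ((p.-1 - b i) %/ D)%N.
have hb : forall i, (b i < D)%N /\ A i = DAP p D (b i).
  by move=> i; have /andP[h1 /eqP h2] := xchooseP (ex i).
have hAm : forall i y, y \in A i <-> exists2 j : nat, (j <= m i)%N & y = (b i + j * D)%N%:R.
  move=> i y; have [bD ->] := hb i.
  have bp : (b i < p)%N by lia.
  by split => [/DAPP|h]; [apply|apply/DAPP].
have SP := fun x => @sumsetP p D k A b m x hAm k1.
set B := (\sum_(i < k) b i)%N in SP.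
set M := (\sum_(i < k) m i)%N in SP.
have Dnd : ~~ (p %| D)%N by rewrite gtnNdvd //; lia.
exists [seq ((B + j * D)%N%:R : 'Z_p) | j <- iota 0 (minn p M.+1)].
split.
- rewrite map_inj_in_uniq ?iota_uniq // => j1 j2.
  rewrite !mem_iota => /andP[_ h1] /andP[_ h2] /(congr1 val).
  rewrite /= !val_Zp_nat // => /eqP; rewrite eqn_modDl => e.
  have h1p : (j1 < p)%N by lia.
  have h2p : (j2 < p)%N by lia.
  wlog le : j1 j2 h1 h2 h1p h2p e / (j1 <= j2)%N.
    move=> W; case/orP: (leq_total j1 j2) => h; first exact: W.
    by symmetry; apply: W => //; rewrite eq_sym.
  move: e; rewrite eq_sym eqn_mod_dvd; last by rewrite leq_mul2r le orbT.
  rewrite -mulnBl Euclid_dvdM // (negbTE Dnd) orbF => dv.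
  apply/eqP; rewrite eqn_leq le /=.
  case: (posnP (j2 - j1)) => [|hpos]; first by lia.
  by move: dv; rewrite gtnNdvd //; lia.
- move=> x; apply/idP/idP.
    move/SP => [j hj ->]; apply/mapP; exists (j %% p)%N.
      rewrite mem_iota /= add0n.
      have := ltn_pmod j (ltnW p1); have := leq_mod j p; lia.
    apply: val_inj; rewrite /= !val_Zp_nat //.
    by rewrite -[RHS]modnDmr modnMml modnDmr.
  case/mapP => j; rewrite mem_iota => /andP [_ hj] ->.
  apply/SP; exists j => //; lia.
- move=> j; rewrite size_map size_iota => hj.
  rewrite !(nth_map 0%N) ?size_iota; try lia.
  rewrite !nth_iota; try lia.
  rewrite !add0n.
  have -> : (B + j.+1 * D = (B + j * D) + D)%N by rewrite mulSnr addnA.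
  rewrite /distpD natrD.
  set X := (B + j * D)%N%:R.
  have -> : X + D%:R - X = D%:R :> 'Z_p by rewrite addrAC subrr add0r.
  have -> : X - (X + D%:R) = - D%:R :> 'Z_p by rewrite opprD addrA subrr add0r.
  have U : (D%:R : 'Z_p) \is a GRing.unit by rewrite unitZpE // prime_coprime.
  rewrite mulNr mulrV //.
  have v1 : nat_of_ord (1 : 'Z_p) = 1%N.
    by have := val_Zp_nat p1 1; rewrite mulr1n modn_small.
  have v2 : (0 < nat_of_ord ((-1)%R : 'Z_p))%N.
    have h : (-1 : 'Z_p) != 0 by rewrite oppr_eq0 oner_eq0.
    rewrite lt0n; apply: contra h => /eqP h0; apply/eqP; apply: val_inj; exact: h0.
  rewrite v1; exact/minn_idPl.
Qed.
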